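(* Let $n\ge2$ and $1\le j\le n+2$ be integers. For every $\lambda\in[1/n,\infty)$, $$\frac{\lambda}{(1+\lambda)^{j-1}}\le\lambda_{n,j}(\lambda)=\widehat\lambda_{n,j-1}(\lambda)\le\lambda^{2-j}$$ (for $j=1$ only the outer inequalities are meant). In particular, if $j\ge3$ then $\lambda_{n,j}(\lambda)\to0$ as $\lambda\to\infty$.
   Context: For an integer $n\ge1$ let $f_n(x)=(1+x)^{n+1}/x$ for $x>0$. The function $f_n$ is strictly decreasing on $(0,1/n]$ and strictly increasing on $[1/n,\infty)$. Regular graph exponents (Schmidt–Summerer), defined algebraically. For $\lambda\in[1/n,\infty)$ let $\mu\in(0,1/n]$ be the unique solution of $f_n(\mu)=f_n(\lambda)$, and set $$\lambda_{n,j}(\lambda)=\lambda^{1-\frac{j-1}{n+1}}\mu^{\frac{j-1}{n+1}},\qquad 1\le j\le n+2 .$$ All ratios $\lambda_{n,j}/\lambda_{n,j+1}$ are equal. Put $\widehat\lambda_{n,j}(\lambda):=\lambda_{n,j+1}(\lambda)$ for $1\le j\le n+1$. These are the simultaneous approximation exponents of the regular graph in dimension $n$ with parameter $\lambda_n=\lambda$. In particular $\lambda_{n,2}(\lambda)=\widehat\lambda_n(\lambda)\le 1$. *)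

(* Defs.v *)
From Stdlib Require Import Reals ClassicalEpsilon.
Open Scope R_scope.

Definition f_n (n : nat) (x : R) : R := (1 + x) ^ (n + 1) / x.

(* mu_n(lambda): the unique mu in (0,1/n] with f_n(mu) = f_n(lambda)
   (chosen by Hilbert's epsilon; for lambda >= 1/n it exists and is unique). *)
Definition mu_n (n : nat) (lam : R) : R :=
  epsilon (inhabits 0)
    (fun m => 0 < m /\ m <= 1 / INR n /\ f_n n m = f_n n lam).

Definition lambda_nj (n j : nat) (lam : R) : R :=
  Rpower lam (1 - (INR j - 1) / (INR n + 1)) *
  Rpower (mu_n n lam) ((INR j - 1) / (INR n + 1)).

Definition hat_lambda_nj (n j : nat) (lam : R) : R := lambda_nj n (j + 1) lam.

(* Main.v *)
Require Import Defs.
From Stdlib Require Import Reals Lra Lia Psatz ClassicalEpsilon.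
Open Scope R_scope.

Lemma my_ln_le x y : 0 < x -> x <= y -> ln x <= ln y.
Proof. intros Hx [H|H]; [left; apply ln_increasing; auto| subst; lra]. Qed.

Lemma my_exp_le x y : x <= y -> exp x <= exp y.
Proof. intros [H|H]; [left; apply exp_increasing; auto| subst; lra]. Qed.

Lemma bernoulli (y : R) (m : nat) : -1 <= y -> 1 + INR m * y <= (1 + y) ^ m.
Proof.
  intros Hy; induction m as [|m IH].
  - simpl; lra.
  - rewrite S_INR; simpl.
    assert (0 <= 1 + y) by lra.
    assert (0 <= INR m) by apply pos_INR.
    assert (0 <= INR m * (y*y)) by (apply Rmult_le_pos; nra).
    assert (0 <= (1+y) * ((1+y)^m - (1 + INR m * y))) by (apply Rmult_le_pos; lra).
    nra.
Qed.

Lemma f_min (n : nat) (x : R) : (1 <= n)%nat -> 0 < x ->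
  (1 + 1 / INR n) ^ (n+1) * INR n * x <= (1 + x) ^ (n+1).
Proof.
  intros Hn Hx.
  assert (Hn0 : 0 < INR n) by (apply lt_0_INR; lia).
  set (y := (x * INR n - 1) / (INR n + 1)).
  assert (Hy2 : y * (INR n + 1) = x * INR n - 1) by (unfold y; field; lra).
  assert (Hy : -1 <= y) by nra.
  assert (E : 1 + x = (1 + 1 / INR n) * (1 + y)). { unfold y; field; lra. }
  rewrite E, Rpow_mult_distr.
  assert (B := bernoulli y (n+1) Hy).
  rewrite plus_INR in B; simpl INR in B.
  assert (E2 : 1 + (INR n + 1) * y = INR n * x) by lra.
  rewrite E2 in B.
  assert (0 < (1 + 1 / INR n) ^ (n+1)).
  { apply pow_lt. assert (0 < 1 / INR n) by (apply Rdiv_lt_0_compat; lra). lra. }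
  nra.
Qed.

Lemma mu_exists (n : nat) (lam : R) : (2 <= n)%nat -> 1 / INR n <= lam ->
  exists m, 0 < m /\ m <= 1 / INR n /\ f_n n m = f_n n lam.
Proof.
  intros Hn Hl.
  assert (Hn0 : 0 < INR n) by (apply lt_0_INR; lia).
  assert (Hp : 0 < 1 / INR n) by (apply Rdiv_lt_0_compat; lra).
  assert (Hlam : 0 < lam) by lra.
  set (F := f_n n lam).
  set (g := fun x => x * F - (1 + x) ^ (n+1)).
  assert (Hfix : forall m, 0 < m -> g m = 0 -> f_n n m = F).
  { intros m Hm Hg. unfold g in Hg. unfold f_n.
    replace ((1 + m) ^ (n+1)) with (m * F) by lra. field; lra. }
  assert (Hg0 : g 0 < 0). { unfold g. rewrite Rplus_0_r, pow1. lra. }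
  assert (Hg1 : 0 <= g (1 / INR n)).
  { unfold g, F, f_n. pose proof (f_min n lam ltac:(lia) Hlam).
    set (P := (1 + lam) ^ (n+1)) in *. set (Q := (1 + 1 / INR n) ^ (n+1)) in *.
    replace (1 / INR n * (P / lam) - Q) with ((P - Q * INR n * lam) / (INR n * lam))
      by (field; lra).
    unfold Rdiv; apply Rmult_le_pos; [lra| left; apply Rinv_0_lt_compat; nra]. }
  destruct (Req_dec (g (1/INR n)) 0) as [Heq|Hne].
  - exists (1/INR n). split; [lra|split; [lra|]]. apply Hfix; auto.
  - assert (Hc : continuity g) by (unfold g; reg).
    destruct (IVT g 0 (1/INR n) Hc Hp Hg0 ltac:(lra)) as [z [Hz Hgz]].
    assert (z <> 0) by (intro; subst; lra).
    exists z. split; [lra|split; [lra|]]. apply Hfix; auto; lra.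
Qed.

Lemma h_decr (a b : R) (N : nat) : 1 <= a -> a < b -> (3 <= N)%nat ->
  b * (1 + a) ^ N < a * (1 + b) ^ N.
Proof.
  intros Ha Hab HN.
  replace N with (3 + (N - 3))%nat by lia. rewrite !pow_add.
  assert (H3 : b * (1 + a) ^ 3 < a * (1 + b) ^ 3).
  { assert (0 < (b-a)*(3*a*b + a*a*b + a*b*b - 1)) by (apply Rmult_lt_0_compat; nra).
    assert (a * (1 + b) ^ 3 - b * (1 + a) ^ 3 = (b-a)*(3*a*b + a*a*b + a*b*b - 1))
      by (simpl; ring).
    lra. }
  assert (Hk : (1 + a) ^ (N - 3) <= (1 + b) ^ (N - 3)) by (apply pow_incr; lra).
  assert (Hk0 : 0 < (1 + a) ^ (N - 3)) by (apply pow_lt; lra).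
  assert (0 < (1 + b) ^ 3) by (apply pow_lt; lra).
  apply Rlt_le_trans with (a * (1 + b) ^ 3 * (1 + a) ^ (N - 3)).
  - rewrite <- Rmult_assoc. apply Rmult_lt_compat_r; auto.
  - rewrite Rmult_assoc. apply Rmult_le_compat_l; [lra|].
    apply Rmult_le_compat_l; lra.
Qed.

Lemma lam_mu (n : nat) (lam m : R) : (2 <= n)%nat -> 1 / INR n <= lam ->
  0 < m -> m <= 1 / INR n ->
  lam * (1 + m) ^ (n+1) = m * (1 + lam) ^ (n+1) -> lam * m <= 1.
Proof.
  intros Hn Hl Hm Hm1 Heq.
  assert (Hn0 : 2 <= INR n) by (replace 2 with (INR 2) by (simpl; lra); apply le_INR; lia).
  assert (Hinv : 1 / INR n <= / 2).
  { unfold Rdiv; rewrite Rmult_1_l; apply Rinv_le_contravar; lra. }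
  destruct (Rle_lt_dec (lam * m) 1) as [H|H]; auto. exfalso.
  set (a := / m).
  assert (Ha : 1 <= a). { unfold a. rewrite <- Rinv_1. apply Rinv_le_contravar; lra. }
  assert (Hal : a < lam). { unfold a. apply Rmult_lt_reg_r with m; auto.
    rewrite Rinv_l; lra. }
  pose proof (h_decr a lam (n+1) Ha Hal ltac:(lia)) as K.
  assert (Hmn : 0 < m ^ (n+1)) by (apply pow_lt; lra).
  assert (K2 : lam * (m * (1 + a)) ^ (n+1) < a * m ^ (n+1) * (1 + lam) ^ (n+1)).
  { rewrite Rpow_mult_distr. nra. }
  replace (m * (1 + a)) with (1 + m) in K2 by (unfold a; field; lra).
  replace (a * m ^ (n+1)) with (m ^ n) in K2
    by (unfold a; rewrite pow_add; simpl; field; lra).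
  rewrite Heq in K2.
  assert (Hmn2 : m ^ n <= m).
  { replace n with (S (n-1)) by lia. simpl.
    assert (m ^ (n-1) <= 1) by (rewrite <- (pow1 (n-1)); apply pow_incr; lra).
    nra. }
  assert (0 < (1 + lam) ^ (n+1)) by (apply pow_lt; lra).
  nra.
Qed.

Lemma mu_facts (n : nat) (lam : R) : (2 <= n)%nat -> 1 / INR n <= lam ->
  let m := mu_n n lam in
  0 < m /\ ln lam - (INR n + 1) * ln (1 + lam) <= ln m /\
  ln m + INR n * ln lam <= 0.
Proof.
  intros Hn Hl m.
  assert (Hn0 : 0 < INR n) by (apply lt_0_INR; lia).
  assert (Hp : 0 < 1 / INR n) by (apply Rdiv_lt_0_compat; lra).
  assert (Hlam : 0 < lam) by lra.
  destruct (epsilon_spec (inhabits 0)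
    (fun m => 0 < m /\ m <= 1 / INR n /\ f_n n m = f_n n lam)
    (mu_exists n lam Hn Hl)) as [Hm [Hm1 Hf]].
  fold (mu_n n lam) in Hm, Hm1, Hf. fold m in Hm, Hm1, Hf.
  assert (Heq : lam * (1 + m) ^ (n+1) = m * (1 + lam) ^ (n+1)).
  { unfold f_n in Hf.
    apply (Rmult_eq_compat_l (m * lam)) in Hf.
    replace (m * lam * ((1 + m) ^ (n + 1) / m)) with (lam * (1 + m) ^ (n+1)) in Hf
      by (field; lra).
    rewrite Hf. field; lra. }
  assert (HL := lam_mu n lam m Hn Hl Hm Hm1 Heq).
  assert (HP : 0 < (1 + lam) ^ (n+1)) by (apply pow_lt; lra).
  split; [auto|split].
  - assert (H1 : lam <= m * (1 + lam) ^ (n+1)).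
    { rewrite <- Heq. assert (1 <= (1 + m) ^ (n+1)) by (apply pow_R1_Rle; lra). nra. }
    apply my_ln_le in H1; auto.
    rewrite ln_mult, ln_pow, plus_INR in H1 by lra. simpl INR in H1. lra.
  - assert (H1 : m * lam ^ n <= 1).
    { assert (H2 : (lam * (1 + m)) ^ (n+1) <= (1 + lam) ^ (n+1))
        by (apply pow_incr; split; nra).
      rewrite Rpow_mult_distr, pow_add in H2.
      replace (lam ^ n * lam ^ 1 * (1 + m) ^ (n + 1)) with
        (lam ^ n * (lam * (1 + m) ^ (n + 1))) in H2 by (simpl; ring).
      rewrite Heq in H2.
      apply Rmult_le_reg_r with ((1 + lam) ^ (n + 1)); auto. lra. }
    assert (0 < lam ^ n) by (apply pow_lt; lra).
    apply my_ln_le in H1; [|nra].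
    rewrite ln_mult, ln_pow, ln_1 in H1 by lra. lra.
Qed.

Theorem proposition2p4 (n j : nat) (hn : (2 <= n)%nat) (hj1 : (1 <= j)%nat)
    (hj2 : (j <= n + 2)%nat) :
  (forall lam : R, 1 / INR n <= lam ->
     lam / (1 + lam) ^ (j - 1) <= lambda_nj n j lam /\
     lambda_nj n j lam <= Rpower lam (2 - INR j) /\
     ((2 <= j)%nat -> lambda_nj n j lam = hat_lambda_nj n (j - 1) lam)) /\
  ((3 <= j)%nat ->
     forall eps : R, 0 < eps ->
       exists M : R, forall lam : R, M <= lam -> Rabs (lambda_nj n j lam) < eps).
Proof.
  assert (Hn0 : 0 < INR n) by (apply lt_0_INR; lia).
  assert (Hp : 0 < 1 / INR n) by (apply Rdiv_lt_0_compat; lra).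
  assert (Hj : 1 <= INR j) by (replace 1 with (INR 1) by (simpl; lra); apply le_INR; lia).
  assert (MAIN : forall lam : R, 1 / INR n <= lam ->
     lam / (1 + lam) ^ (j - 1) <= lambda_nj n j lam /\
     lambda_nj n j lam <= Rpower lam (2 - INR j) /\
     ((2 <= j)%nat -> lambda_nj n j lam = hat_lambda_nj n (j - 1) lam)).
  { intros lam Hl.
    assert (Hlam : 0 < lam) by lra.
    destruct (mu_facts n lam hn Hl) as [Hm [L1 L2]].
    set (m := mu_n n lam) in *.
    set (t := (INR j - 1) / (INR n + 1)).
    assert (Ht : 0 <= t) by (unfold t; unfold Rdiv; apply Rmult_le_pos; [lra|left; apply Rinv_0_lt_compat; lra]).
    assert (Hk : INR j - 1 = t * (INR n + 1)) by (unfold t; field; lra).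
    unfold lambda_nj. fold t. fold m. unfold Rpower. rewrite <- exp_plus.
    split; [|split].
    - assert (0 < (1 + lam) ^ (j - 1)) by (apply pow_lt; lra).
      rewrite <- (exp_ln (lam / (1 + lam) ^ (j - 1))) by (apply Rdiv_lt_0_compat; lra).
      apply my_exp_le.
      unfold Rdiv. rewrite ln_mult, ln_Rinv, ln_pow, minus_INR by (auto; try lia; try lra;
        apply Rinv_0_lt_compat; lra).
      simpl INR. rewrite Hk.
      assert (0 <= t * (ln m - (ln lam - (INR n + 1) * ln (1 + lam)))) by
        (apply Rmult_le_pos; lra).
      nra.
    - apply my_exp_le.
      assert (0 <= t * (- (ln m + INR n * ln lam))) by (apply Rmult_le_pos; lra).
      replace (2 - INR j) with (1 - t * (INR n + 1)) by lra.
      nra.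
    - intros Hj2. unfold hat_lambda_nj. replace (j - 1 + 1)%nat with j by lia.
      unfold lambda_nj, Rpower. fold t. fold m. rewrite <- exp_plus. reflexivity. }
  split; [exact MAIN|].
  intros Hj3 eps Heps.
  assert (Hj3' : 3 <= INR j) by (replace 3 with (INR 3) by (simpl; lra); apply le_INR; lia).
  exists (1 + / eps). intros lam Hl.
  assert (Hie : 0 < / eps) by (apply Rinv_0_lt_compat; lra).
  assert (Hl1 : 1 <= lam) by lra.
  assert (Hn1 : 1 / INR n <= 1).
  { assert (1 <= INR n) by (replace 1 with (INR 1) by (simpl; lra); apply le_INR; lia).
    unfold Rdiv; rewrite Rmult_1_l, <- Rinv_1; apply Rinv_le_contravar; lra. }
  destruct (MAIN lam ltac:(lra)) as [_ [U _]].
  assert (Hpos : 0 < lambda_nj n j lam).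
  { unfold lambda_nj, Rpower. apply Rmult_lt_0_compat; apply exp_pos. }
  rewrite Rabs_pos_eq by lra.
  apply Rle_lt_trans with (Rpower lam (2 - INR j)); auto.
  unfold Rpower.
  assert (Hln : 0 <= ln lam) by (rewrite <- ln_1; apply my_ln_le; lra).
  apply Rle_lt_trans with (exp (- ln lam)).
  { apply my_exp_le. nra. }
  rewrite exp_Ropp, exp_ln by lra.
  apply Rmult_lt_reg_l with lam; [lra|].
  rewrite Rinv_r by lra.
  assert (lam * eps > 1).
  { assert (eps * (1 + / eps) = eps + 1) by (field; lra). nra. }
  lra.
Qed.
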